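(* In System $\mathsf{F_{<:}^{K\top}}$, for any type $\Theta\vdash T$, the type $\Theta^*(T)$ is not a type variable, satisfies $\Theta\vdash T<:\Theta^*(T)$, and for every type $\Theta\vdash T'$ that is not a type variable, if $\Theta\vdash T<:T'$ then $\Theta\vdash\Theta^*(T)<:T'$.
   Context: System $\mathsf{F_{<:}^{K\top}}$: raw types $T ::= \top \mid X \mid T\to T \mid \forall^{\mathsf K}(X<:T).T \mid \forall^\top(X<:T).T$, up to $\alpha$-conversion. Contexts $\Theta$: finite sequences of $X<:T$ or $x:T$ with distinct variables, each type well-formed over the preceding part. Subtyping $\Theta\vdash S<:T$: (Var) $\Theta,X<:T,\Theta'\vdash X<:T$; (Top) $T<:\top$; (Refl); (Trans); ($\to$) from $S'<:S$, $T<:T'$ infer $S\to T<:S'\to T'$; ($\forall$-Fun) from $\Theta,X<:S\vdash T<:T'$ infer $\Theta\vdash\forall^{\mathsf K}(X<:S).T<:\forall^{\mathsf K}(X<:S).T'$; ($\forall$-Loc) from $\Theta\vdash T_0<:S_0$, $\Theta,X<:S_0\vdash S_1<:T_1$ infer $\Theta\vdash\forall^{\mathsf K}(X<:S_0).S_1<:\forall^\top(X<:T_0).T_1$; ($\forall$-Top) from $\Theta\vdash T_0<:S_0$, $\Theta,X<:\top\vdash S_1<:T_1$ infer $\Theta\vdash\forall^\top(X<:S_0).S_1<:\forall^\top(X<:T_0).T_1$. $\Theta^*(T)$ is defined by: $\Theta^*(T)=\Theta^*(S)$ if $T\equiv X$ and $\Theta\equiv\Theta',X<:S,\Theta''$;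 $\Theta^*(T)=T$ otherwise. *)

(* Defs.v *)
(* System F_{<:}^{K Top}, de Bruijn representation (types up to alpha-conversion). *)
From Stdlib Require Import List.

(* Raw types: Top | X | T -> T | forall^K (X<:T).T | forall^Top (X<:T).T.
   In the two binders the body (second argument) is under the new variable. *)
Inductive typ : Type :=
  | TTop : typ
  | TVar : nat -> typ
  | TArr : typ -> typ -> typ
  | TAllK : typ -> typ -> typ
  | TAllT : typ -> typ -> typ.

Fixpoint tshift (c : nat) (T : typ) : typ :=
  match T with
  | TTop => TTop
  | TVar n => if Nat.leb c n then TVar (S n) else TVar n
  | TArr A B => TArr (tshift c A) (tshift c B)
  | TAllK A B => TAllK (tshift c A) (tshift (Datatypes.S c) B)
  | TAllT A B => TAllT (tshift c A) (tshift (Datatypes.S c) B)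
  end.

Definition shift1 (T : typ) : typ := tshift 0 T.

(* A context is a list, most recent binding first; de Bruijn index n refers to
   the n-th entry (from the head).  Each entry's type lives in the context
   formed by the entries after it (the preceding part). *)
Inductive entry : Type :=
  | ETyp : typ -> entry
  | ETerm : typ -> entry.

Definition ctx := list entry.

(* Bound of type variable n in context G, expressed in G (i.e. suitably lifted);
   None if n does not denote a type variable of G. *)
Fixpoint lookup_tvar (G : ctx) (n : nat) : option typ :=
  match G, n with
  | ETyp B :: _, 0 => Some (shift1 B)
  | _ :: G', Datatypes.S m => option_map shift1 (lookup_tvar G' m)
  | _, _ => None
  end.

Inductive wf_typ : ctx -> typ -> Prop :=
  | wf_top : forall G, wf_typ G TTop
  | wf_var : forall G n U, lookup_tvar G n = Some U -> wf_typ G (TVar n)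
  | wf_arr : forall G S T, wf_typ G S -> wf_typ G T -> wf_typ G (TArr S T)
  | wf_allK : forall G S T, wf_typ G S -> wf_typ (ETyp S :: G) T -> wf_typ G (TAllK S T)
  | wf_allT : forall G S T, wf_typ G S -> wf_typ (ETyp S :: G) T -> wf_typ G (TAllT S T).

(* Well-formed contexts: each entry's type is well-formed over the preceding part
   (distinctness of variables is automatic with de Bruijn indices). *)
Inductive wf_ctx : ctx -> Prop :=
  | wfc_nil : wf_ctx nil
  | wfc_typ : forall G T, wf_ctx G -> wf_typ G T -> wf_ctx (ETyp T :: G)
  | wfc_term : forall G T, wf_ctx G -> wf_typ G T -> wf_ctx (ETerm T :: G).

Inductive sub : ctx -> typ -> typ -> Prop :=
  | S_Var : forall G n U, lookup_tvar G n = Some U -> sub G (TVar n) U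
  | S_Top : forall G T, sub G T TTop
  | S_Refl : forall G T, sub G T T
  | S_Trans : forall G S U T, sub G S U -> sub G U T -> sub G S T
  | S_Arr : forall G S S' T T', sub G S' S -> sub G T T' -> sub G (TArr S T) (TArr S' T')
  | S_AllFun : forall G S T T', sub (ETyp S :: G) T T' -> sub G (TAllK S T) (TAllK S T')
  | S_AllLoc : forall G S0 S1 T0 T1,
      sub G T0 S0 -> sub (ETyp S0 :: G) S1 T1 -> sub G (TAllK S0 S1) (TAllT T0 T1)
  | S_AllTop : forall G S0 S1 T0 T1,
      sub G T0 S0 -> sub (ETyp TTop :: G) S1 T1 -> sub G (TAllT S0 S1) (TAllT T0 T1).

(* Theta^*(T): if T = X with X <: S in Theta, then Theta^*(S) (computed in the
   prefix before X, then lifted back to Theta); otherwise T. *)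
Fixpoint star (G : ctx) (T : typ) {struct G} : typ :=
  match T with
  | TVar n =>
      match G with
      | nil => T
      | e :: G' =>
          match n with
          | 0 => match e with
                 | ETyp B => shift1 (star G' B)
                 | ETerm _ => T
                 end
          | Datatypes.S m => shift1 (star G' (TVar m))
          end
      end
  | _ => T
  end.

Definition is_tvar (T : typ) : Prop := exists n, T = TVar n.

(* Main.v *)
Require Import Defs.
From Stdlib Require Import List Lia Arith.

Lemma shift1_var V m : shift1 V = TVar m -> exists k, V = TVar k /\ m = S k.
Proof. destruct V; simpl; intro H; try discriminate. inversion H; eauto. Qed.

Lemma shift1_nonvar V : ~ is_tvar V -> ~ is_tvar (shift1 V).
Proof. intros H [m Hm]. apply shift1_var in Hm as [k [-> _]]. apply H; eexists; reflexivity. Qed.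

Lemma star_nonvar G T : ~ is_tvar T -> star G T = T.
Proof. intro H; destruct T; destruct G; simpl; auto; exfalso; apply H; eexists; reflexivity. Qed.

Lemma star_shift e G T : star (e :: G) (shift1 T) = shift1 (star G T).
Proof.
  destruct T; destruct G; simpl; reflexivity.
Qed.

Lemma star_lookup G n U : lookup_tvar G n = Some U -> star G (TVar n) = star G U.
Proof.
  revert n U; induction G as [|e G IH]; intros n U H; simpl in H; try discriminate.
  destruct n as [|m].
  - destruct e; inversion H; subst. rewrite star_shift. reflexivity.
  - assert (H' : option_map shift1 (lookup_tvar G m) = Some U) by (destruct e; exact H).
    destruct (lookup_tvar G m) eqn:E; simpl in H'; try discriminate.
    inversion H'; subst. rewrite star_shift. rewrite <- (IH _ _ E).
    destruct e; reflexivity.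
Qed.

Lemma star_none G n : lookup_tvar G n = None -> star G (TVar n) = TVar n.
Proof.
  revert n; induction G as [|e G IH]; intros n H; simpl in *; auto.
  destruct n as [|m].
  - destruct e; simpl; auto. discriminate.
  - assert (H' : option_map shift1 (lookup_tvar G m) = None) by (destruct e; exact H).
    destruct (lookup_tvar G m) eqn:E; simpl in H'; try discriminate.
    rewrite (IH _ E). destruct e; reflexivity.
Qed.

Lemma lookup_lt G n m : lookup_tvar G n = Some (TVar m) -> n < m.
Proof.
  revert n m; induction G as [|e G IH]; intros n m H; simpl in H; try discriminate.
  destruct n as [|n'].
  - destruct e; try discriminate. inversion H as [H1].
    apply shift1_var in H1 as [k [_ ->]]. lia.
  - assert (H' : option_map shift1 (lookup_tvar G n') = Some (TVar m)) by (destruct e; exact H).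
    destruct (lookup_tvar G n') eqn:E; simpl in H'; try discriminate.
    inversion H' as [H1]. apply shift1_var in H1 as [k [-> ->]].
    apply IH in E. lia.
Qed.

Lemma lookup_len G n U : lookup_tvar G n = Some U -> n < length G.
Proof.
  revert n U; induction G as [|e G IH]; intros n U H; simpl in *; try discriminate.
  destruct n as [|n']. lia.
  assert (H' : option_map shift1 (lookup_tvar G n') = Some U) by (destruct e; exact H).
  destruct (lookup_tvar G n') eqn:E; simpl in H'; try discriminate.
  apply IH in E. lia.
Qed.

Lemma sub_star_var G : forall k n, length G - n <= k -> sub G (TVar n) (star G (TVar n)).
Proof.
  induction k; intros n Hk.
  - destruct (lookup_tvar G n) eqn:E.
    + apply lookup_len in E. lia.
    + rewrite (star_none _ _ E). apply S_Refl.
  - destruct (lookup_tvar G n) eqn:E.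
    + rewrite (star_lookup _ _ _ E).
      destruct t; try (rewrite star_nonvar; [apply S_Var; exact E | intros [? Hx]; discriminate]).
      apply S_Trans with (TVar n0). apply S_Var; exact E.
      apply lookup_lt in E. apply IHk. lia.
    + rewrite (star_none _ _ E). apply S_Refl.
Qed.

Lemma sub_star_mono G S T : sub G S T -> sub G (star G S) (star G T).
Proof.
  induction 1.
  - rewrite (star_lookup _ _ _ H). apply S_Refl.
  - rewrite (star_nonvar G TTop); [apply S_Top | intros [? Hx]; discriminate].
  - apply S_Refl.
  - eapply S_Trans; eauto.
  - rewrite !star_nonvar by (intros [? Hx]; discriminate). apply S_Arr; auto.
  - rewrite !star_nonvar by (intros [? Hx]; discriminate). apply S_AllFun; auto.
  - rewrite !star_nonvar by (intros [? Hx]; discriminate). apply S_AllLoc; auto.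
  - rewrite !star_nonvar by (intros [? Hx]; discriminate). apply S_AllTop; auto.
Qed.

Lemma star_wf G : wf_ctx G -> forall T, wf_typ G T -> ~ is_tvar (star G T).
Proof.
  induction 1 as [|G B HG IH HB|G B HG IH HB]; intros T HT.
  - inversion HT; subst; try (simpl in *; discriminate); intros [? Hx]; discriminate.
  - destruct T; simpl; try (intros [? Hx]; discriminate).
    inversion HT; subst. destruct n as [|m].
    + apply shift1_nonvar. apply IH; auto.
    + apply shift1_nonvar. apply IH. simpl in H1.
      destruct (lookup_tvar G m) eqn:E; simpl in H1; try discriminate.
      econstructor; eauto.
  - destruct T; simpl; try (intros [? Hx]; discriminate).
    inversion HT; subst. destruct n as [|m].
    + simpl in H1. discriminate.
    + apply shift1_nonvar. apply IH. simpl in H1.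
      destruct (lookup_tvar G m) eqn:E; simpl in H1; try discriminate.
      econstructor; eauto.
Qed.

Theorem lemma6p3 (G : ctx) (T : typ) :
  wf_ctx G -> wf_typ G T ->
  ~ is_tvar (star G T) /\
  sub G T (star G T) /\
  (forall T' : typ, wf_typ G T' -> ~ is_tvar T' -> sub G T T' -> sub G (star G T) T').
Proof.
  intros HG HT. split; [|split].
  - apply star_wf; auto.
  - destruct T; try (rewrite star_nonvar by (intros [? Hx]; discriminate); apply S_Refl).
    eapply sub_star_var; eauto.
  - intros T' _ HT' Hs. apply sub_star_mono in Hs. rewrite (star_nonvar G T' HT') in Hs. exact Hs.
Qed.
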